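(* Tight GFG-NSWs and tight GFG-NRWs are weak-type: every tight GFG-NSW and every tight GFG-NRW $\mathcal{A}=\langle\Sigma,Q,Q_0,\delta,\alpha\rangle$ whose language is recognized by some GFG-NWW has an equivalent GFG-NWW on the same structure, i.e. there is $\alpha'\subseteq Q$ such that $\langle\Sigma,Q,Q_0,\delta,\alpha'\rangle$ is a weak automaton, is GFG, and recognizes $L(\mathcal{A})$.
   Context: An automaton $\langle\Sigma,Q,Q_0,\delta,\alpha\rangle$ has $\delta:Q\times\Sigma\to2^Q$; runs are accepting if the set $S$ of infinitely visited states satisfies $\alpha$. Rabin ($\alpha$ a set of pairs $\langle E,F\rangle$): some pair has $S\cap E=\emptyset$, $S\cap F\ne\emptyset$; Streett: every pair has $S\cap E=\emptyset$ or $S\cap F\ne\emptyset$; Büchi ($\alpha\subseteq Q$): $S\cap\alpha\ne\emptyset$. A Büchi automaton is weak if each strongly connected component $C$ satisfies $C\subseteq\alpha$ or $C\cap\alpha=\emptyset$. NSW/NRW/NWW: nondeterministic Streett/Rabin/weak word automaton. $\mathcal{A}$ is GFG if there is a strategy $g:\Sigma^*\to Q$ such that for every $w=a_1a_2\cdots$, $g(\epsilon),g(a_1),g(a_1a_2),\ldots$ is a run on $w$, accepting whenever $w\in L(\mathcal{A})$. Finite-state strategies are transducers $g=\langle\Sigma,Q,M,m_0,\rho,\tau\rangle$ (finite memories $M$, $\rho:M\times\Sigma\to M$ extended to words from $m_0$, $\tau:M\to Q$, $g(u)=\tau(\rho(u))$); $m$ is a memory of $q$ if $\tau(m)=q$.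 $\mathcal{A}_g=\langle\Sigma,M,m_0,\rho,\alpha_g\rangle$ where $\alpha_g$ replaces each set $F$ in $\alpha$ by $\{m\mid\tau(m)\in F\}$. A transition $\langle q,a,q'\rangle$ is used by $g$ if $q=g(u)$, $q'=g(ua)$ for some $u$. A combination of paths from a set $P$ of finite paths is the union of the element sets of a nonempty subset of $P$. For memories $m\neq m'$ with $\tau(m)=\tau(m')$, $m$ is replaceable by $m'$ if the set of paths of $\mathcal{A}_g$ from $m'$ to $m$ is empty or all its combinations are accepting. $\mathcal{A}$ is tight if for some finite-state strategy $g$ witnessing its GFGness, every transition is used by $g$ and no memory is replaceable by a different memory of the same state. *)

(* Defs.v *)
From mathcomp Require Import all_boot.
Set Implicit Arguments. Unset Strict Implicit. Unset Printing Implicit Defensive.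

Inductive acond (Q : finType) :=
  | Rabin of seq ({set Q} * {set Q})
  | Streett of seq ({set Q} * {set Q})
  | Buchi of {set Q}.

(* S is the set of infinitely visited states, given as a predicate. *)
Definition acc_set (Q : finType) (c : acond Q) (S : Q -> Prop) : Prop :=
  match c with
  | Rabin ps => exists2 p, p \in ps &
       (forall q, q \in p.1 -> ~ S q) /\ (exists q, q \in p.2 /\ S q)
  | Streett ps => forall p, p \in ps ->
       (forall q, q \in p.1 -> ~ S q) \/ (exists q, q \in p.2 /\ S q)
  | Buchi F => exists q, q \in F /\ S q
  end.

Definition map_cond (M Q : finType) (f : M -> Q) (c : acond Q) : acond M :=
  match c with
  | Rabin ps => Rabin [seq ([set m | f m \in p.1], [set m | f m \in p.2]) | p : {set Q} * {set Q} <- ps]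
  | Streett ps => Streett [seq ([set m | f m \in p.1], [set m | f m \in p.2]) | p : {set Q} * {set Q} <- ps]
  | Buchi F => Buchi [set m | f m \in F]
  end.

Record aut (Sigma Q : finType) := Aut {
  init : {set Q};
  delta : Q -> Sigma -> {set Q};
  acc : acond Q }.

Definition is_streett (S Q : finType) (A : aut S Q) :=
  if acc A is Streett _ then true else false.
Definition is_rabin (S Q : finType) (A : aut S Q) :=
  if acc A is Rabin _ then true else false.

Definition inf_often (Q : Type) (r : nat -> Q) (q : Q) : Prop :=
  forall n, exists m, n <= m /\ r m = q.

Definition is_run (S Q : finType) (A : aut S Q) (w : nat -> S) (r : nat -> Q) :=
  r 0 \in init A /\ forall i, r i.+1 \in delta A (r i) (w i).

Definition accepting (S Q : finType) (A : aut S Q) (r : nat -> Q) :=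
  acc_set (acc A) (inf_often r).

Definition lang (S Q : finType) (A : aut S Q) (w : nat -> S) : Prop :=
  exists r, is_run A w r /\ accepting A r.

(* prefix a_1 ... a_n of w (w 0 is the first letter) *)
Definition prefix (S : Type) (w : nat -> S) (n : nat) : seq S := mkseq w n.

Definition gfg_strategy (S Q : finType) (A : aut S Q) (g : seq S -> Q) :=
  forall w : nat -> S,
    is_run A w (fun n => g (prefix w n)) /\
    (lang A w -> accepting A (fun n => g (prefix w n))).

Definition GFG (S Q : finType) (A : aut S Q) := exists g, gfg_strategy A g.

Definition edge (S Q : finType) (A : aut S Q) : rel Q :=
  fun q q' => [exists a, q' \in delta A q a].

Definition scc (S Q : finType) (A : aut S Q) (q : Q) : {set Q} :=
  [set q' | connect (edge A) q q' && connect (edge A) q' q].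

Definition weak (S Q : finType) (A : aut S Q) : Prop :=
  match acc A with
  | Buchi F => forall q, scc A q \subset F \/ [disjoint scc A q & F]
  | _ => False
  end.

Definition tstrat (S Q M : finType) (m0 : M) (rho : M -> S -> M) (tau : M -> Q)
  : seq S -> Q := fun u => tau (foldl rho m0 u).

(* finite paths of A_g from m1 to m2, as sequences of memories *)
Definition mpath (S M : finType) (rho : M -> S -> M) (m1 m2 : M) (p : seq M) :=
  exists s, p = m1 :: s /\ path (fun x y => [exists a, rho x a == y]) m1 s
            /\ last m1 s = m2.

Definition combination (M : finType) (P : seq M -> Prop) (C : {set M}) :=
  exists P' : seq M -> Prop, (forall p, P' p -> P p) /\ (exists p, P' p) /\
     (forall x, x \in C <-> exists p, P' p /\ x \in p).

Definition replaceable (S Q M : finType) (alpha : acond Q)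
    (rho : M -> S -> M) (tau : M -> Q) (m m' : M) :=
  m != m' /\ tau m = tau m' /\
  ((forall p, ~ mpath rho m' m p) \/
   (forall C, combination (mpath rho m' m) C ->
      acc_set (map_cond tau alpha) (fun x => x \in C))).

Definition tight (S Q : finType) (A : aut S Q) : Prop :=
  exists (M : finType) (m0 : M) (rho : M -> S -> M) (tau : M -> Q),
    let g := tstrat m0 rho tau in
    gfg_strategy A g /\
    (forall q a q', q' \in delta A q a ->
        exists u, g u = q /\ g (rcons u a) = q') /\
    (forall m m', ~ replaceable (acc A) rho tau m m').

Definition GFG_NWW_recognizable (S Q : finType) (A : aut S Q) : Prop :=
  exists (Q' : finType) (B : aut S Q'),
    weak B /\ GFG B /\ forall w, lang B w <-> lang A w.

(* Main.v *)
Require Import Defs.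
From mathcomp Require Import all_boot.
From Stdlib Require Import Classical ClassicalEpsilon FunctionalExtensionality.
Set Implicit Arguments. Unset Strict Implicit. Unset Printing Implicit Defensive.
Local Notation prefix := Defs.prefix.

Lemma PH (T : finType) (f : nat -> T) (P : T -> Prop) :
  (forall n, exists k, n <= k /\ P (f k)) -> exists x, P x /\ inf_often f x.
Proof.
move=> H; apply: NNPP => Hn.
have Hb : forall x, P x -> exists n, forall k, n <= k -> f k <> x.
  move=> x Px; apply: NNPP => Hc; apply: Hn; exists x; split => // n.
  apply: NNPP => Hd; apply: Hc; exists n => k Hk Hfk; apply: Hd; by exists k.
pose nb x := epsilon (inhabits 0) (fun n => forall k, n <= k -> f k <> x).
have [k [Hk Pk]] := H (\max_(x : T) nb x).
have Hs := epsilon_spec (inhabits 0) (fun n => forall j, n <= j -> f j <> f k) (Hb _ Pk).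
apply: (Hs k) => //; apply: leq_trans Hk; exact: (@leq_bigmax _ nb).
Qed.

Lemma Ev (T : finType) (f : nat -> T) : exists N, forall i, N <= i -> inf_often f (f i).
Proof.
pose nb x := epsilon (inhabits 0) (fun n => forall k, n <= k -> f k <> x).
exists (\max_(x : T) nb x) => i Hi; apply: NNPP => Hn.
have Hb : exists n, forall k, n <= k -> f k <> f i.
  apply: NNPP => Hc; apply: Hn => n; apply: NNPP => Hd; apply: Hc; exists n => k Hk Hfk.
  apply: Hd; by exists k.
have Hs := epsilon_spec (inhabits 0) (fun n => forall j, n <= j -> f j <> f i) Hb.
apply: (Hs i) => //; apply: leq_trans Hi; exact: (@leq_bigmax _ nb).
Qed.

Lemma acc_set_ext (Q : finType) (c : acond Q) (S1 S2 : Q -> Prop) :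
  (forall q, S1 q <-> S2 q) -> acc_set c S1 -> acc_set c S2.
Proof.
move=> H; case: c => [ps|ps|F] /=.
- case=> p Hp [H1 [q [Hq Sq]]]; exists p => //; split.
    by move=> q' Hq' /H; apply: H1.
  by exists q; split => //; apply/H.
- move=> Hp p /Hp [H1|[q [Hq Sq]]]; [left|right].
    by move=> q' Hq' /H; apply: H1.
  by exists q; split => //; apply/H.
- by case=> q [Hq Sq]; exists q; split => //; apply/H.
Qed.

Lemma inf_shift (T : Type) (r : nat -> T) n q :
  inf_often (fun i => r (i + n)) q <-> inf_often r q.
Proof.
split=> H k.
- have [m [Hm Hr]] := H k; exists (m + n); split => //; exact: leq_trans Hm (leq_addr _ _).
- have [m [Hm Hr]] := H (k + n); exists (m - n); split; first by rewrite leq_subRL ?(leq_trans (leq_addl _ _) Hm) // addnC.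
  by rewrite subnK // (leq_trans (leq_addl _ _) Hm).
Qed.

Lemma run_connect_gen (S Q : finType) (A : aut S Q) (w : nat -> S) (r : nat -> Q) :
  (forall i, r i.+1 \in delta A (r i) (w i)) -> forall i j, i <= j -> connect (edge A) (r i) (r j).
Proof.
move=> Hr i j /subnK <-; elim: (j - i) => [|k IH]; first by rewrite add0n connect0.
apply: connect_trans IH _; rewrite addSn; apply: connect1; apply/existsP; exists (w (k + i)).
exact: Hr.
Qed.

Lemma prefix_add (X : Type) (w : nat -> X) i l :
  prefix w (i + l) = prefix w i ++ mkseq (fun k => w (i + k)) l.
Proof. rewrite /prefix /mkseq iotaD map_cat add0n -(addn0 i) iotaDl -map_comp addn0; congr (_ ++ _); apply: eq_map => k /=; by rewrite addn0. Qed.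

Lemma prefixS (X : Type) (w : nat -> X) n : prefix w n.+1 = rcons (prefix w n) (w n).
Proof. by rewrite -addn1 prefix_add cats1 /mkseq /= addn0. Qed.

Lemma size_prefix (X : Type) (w : nat -> X) n : size (prefix w n) = n.
Proof. by rewrite size_mkseq. Qed.

Lemma prefix_ext (X : Type) (w w' : nat -> X) n :
  (forall i, i < n -> w i = w' i) -> prefix w n = prefix w' n.
Proof.
move=> H; apply: (@eq_from_nth _ (w 0)); rewrite !size_prefix // => i Hi.
by rewrite /prefix !nth_mkseq // H.
Qed.

Definition cat_w (X : Type) (u : seq X) (t : nat -> X) : nat -> X :=
  fun i => if i < size u then nth (t 0) u i else t (i - size u).

Lemma prefix_cat_w (X : Type) (u : seq X) t n :
  prefix (cat_w u t) (size u + n) = u ++ prefix t n.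
Proof.
rewrite prefix_add; congr (_ ++ _).
  apply: (@eq_from_nth _ (t 0)); rewrite ?size_prefix // => i Hi.
  by rewrite /prefix nth_mkseq // /cat_w Hi.
apply: eq_mkseq => k; rewrite /cat_w ltnNge leq_addr /=.
by rewrite addnC addnK.
Qed.

Lemma cat_w_cat (X : Type) (u v : seq X) t i :
  cat_w (u ++ v) t i = cat_w u (cat_w v t) i.
Proof.
rewrite /cat_w size_cat nth_cat.
case: (ltnP i (size u)) => Hu.
  by rewrite (ltn_addr _ Hu); apply: set_nth_default.
rewrite ltn_subLR // subnDA.
done.
Qed.

Fixpoint stg (X St : Type) (P0 : seq X) (s0 : St) (ext : seq X -> St -> seq X * St) (n : nat)
  : seq X * St :=
  match n with
  | 0 => (P0, s0)
  | n.+1 => let ps := stg P0 s0 ext n in let es := ext ps.1 ps.2 in (ps.1 ++ es.1, es.2)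
  end.

Definition limw (X St : Type) (x0 : X) P0 (s0 : St) ext : nat -> X :=
  fun i => nth x0 (stg P0 s0 ext i.+1).1 i.

Section Stages.
Variables (X St : Type) (x0 : X) (P0 : seq X) (s0 : St) (ext : seq X -> St -> seq X * St).
Hypothesis HE : forall P s, 0 < size (ext P s).1.

Lemma stg_size n : n <= size (stg P0 s0 ext n).1.
Proof.
elim: n => //= n IH; rewrite size_cat.
by apply: leq_trans (leq_add IH (HE _ _)); rewrite addn1.
Qed.

Lemma stg_prefix m n : m <= n -> exists e, (stg P0 s0 ext n).1 = (stg P0 s0 ext m).1 ++ e.
Proof.
move/subnK => <-; elim: (n - m) => [|k [e IH]]; first by exists [::]; rewrite cats0.
by rewrite addSn /= IH -catA; eexists.
Qed.

Lemma limw_nth n i : i < size (stg P0 s0 ext n).1 ->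
  limw x0 P0 s0 ext i = nth x0 (stg P0 s0 ext n).1 i.
Proof.
move=> Hi; rewrite /limw.
have Hi1 : i < size (stg P0 s0 ext i.+1).1 by exact: stg_size.
case: (leqP i.+1 n) => H.
  by have [e ->] := stg_prefix H; rewrite nth_cat Hi1.
have [e ->] := stg_prefix (ltnW H); by rewrite nth_cat Hi.
Qed.

Lemma limw_prefix n k : k <= size (stg P0 s0 ext n).1 ->
  prefix (limw x0 P0 s0 ext) k = take k (stg P0 s0 ext n).1.
Proof.
move=> Hk; apply: (@eq_from_nth _ x0); first by rewrite size_prefix size_take; case: ltngtP Hk => // ->.
move=> i; rewrite size_prefix => Hi.
rewrite /prefix nth_mkseq // nth_take // (@limw_nth n) //; exact: leq_trans Hi Hk.
Qed.

Lemma limw_prefix_stg n : prefix (limw x0 P0 s0 ext) (size (stg P0 s0 ext n).1) = (stg P0 s0 ext n).1.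
Proof. by rewrite (limw_prefix (leqnn _)) take_size. Qed.
End Stages.

Section Main.
Variables (S Q : finType) (A : aut S Q) (M : finType) (m0 : M) (rho : M -> S -> M) (tau : M -> Q).
Local Notation g := (tstrat m0 rho tau).
Hypothesis Hg : gfg_strategy A g.
Hypothesis Hused : forall q a q', q' \in delta A q a -> exists u, g u = q /\ g (rcons u a) = q'.
Hypothesis Hlink : forall m m', ~ replaceable (acc A) rho tau m m'.

Definition mem (u : seq S) := foldl rho m0 u.
Definition memrun (w : nat -> S) n := mem (prefix w n).
Definition accM (X : M -> Prop) := acc_set (map_cond tau (acc A)) X.
Definition memacc w := accM (inf_often (memrun w)).
Definition pset (nu : M) (z : seq S) := [seq foldl rho nu (take l z) | l <- iota 0 (size z)].
Definition accS (s : seq M) := accM (fun m => m \in s).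

Lemma acc_map (X : M -> Prop) :
  accM X <-> acc_set (acc A) (fun q => exists m, X m /\ tau m = q).
Proof.
rewrite /accM; case: (acc A) => [ps|ps|F] /=.
- split.
  + case=> p /mapP [p0 Hp0 ->] /= [H1 [m [Hm Xm]]]; exists p0 => //; split.
      by move=> q Hq [m' [Xm' Hm']]; apply: (H1 m') => //; rewrite inE Hm'.
    by exists (tau m); split; [move: Hm; rewrite inE | exists m].
  + case=> p0 Hp0 [H1 [q [Hq [m [Xm Hm]]]]]; exists ([set m | tau m \in p0.1], [set m | tau m \in p0.2]).
      by apply/mapP; exists p0.
    split => /=.
      by move=> m'; rewrite inE => Hm' Xm'; apply: (H1 _ Hm'); exists m'.
    by exists m; split => //; rewrite inE Hm.
- split.
  + move=> H p0 Hp0.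
    have /H [H1|[m [Hm Xm]]] : ([set m | tau m \in p0.1], [set m | tau m \in p0.2]) \in
        [seq ([set m | tau m \in p.1], [set m | tau m \in p.2]) | p : {set Q} * {set Q} <- ps].
      by apply/mapP; exists p0.
    * left => q Hq [m' [Xm' Hm']]; apply: (H1 m') => //=; by rewrite inE Hm'.
    * right; exists (tau m); split; [move: Hm; rewrite inE | exists m] => //.
  + move=> H p /mapP [p0 Hp0 ->] /=; case: (H p0 Hp0) => [H1|[q [Hq [m [Xm Hm]]]]].
      by left => m; rewrite inE => Hm Xm; apply: (H1 _ Hm); exists m.
    by right; exists m; split => //; rewrite inE Hm.
- split.
  + case=> m [Hm Xm]; exists (tau m); split; [move: Hm; rewrite inE | exists m] => //.
  + case=> q [Hq [m [Xm Hm]]]; exists m; split => //; by rewrite inE Hm.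
Qed.

Lemma inf_tau (f : nat -> M) q :
  inf_often (fun n => tau (f n)) q <-> exists m, inf_often f m /\ tau m = q.
Proof.
split.
  move=> H; have [m [Hm Hi]] := PH (P := fun m => tau m = q) (f := f) H.
  by exists m.
by case=> m [Hi <-] n; have [k [Hk Hf]] := Hi n; exists k; rewrite Hf.
Qed.

Lemma grun_acc w :
  accepting A (fun n => g (prefix w n)) <-> memacc w.
Proof.
rewrite /accepting /memacc acc_map; split; apply: acc_set_ext => q.
  exact: (inf_tau (memrun w)).
symmetry; exact: (inf_tau (memrun w)).
Qed.

Lemma lang_memacc w : lang A w <-> memacc w.
Proof.
split; first by move=> /((Hg w).2); rewrite grun_acc.
by move=> H; exists (fun n => g (prefix w n)); split; [exact: (Hg w).1 | rewrite grun_acc].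
Qed.

Lemma mem_pset nu z m : m \in pset nu z <-> exists l, l < size z /\ foldl rho nu (take l z) = m.
Proof.
split.
  by case/mapP => l; rewrite mem_iota add0n => /andP[_ Hl] ->; exists l.
by case=> l [Hl <-]; apply/mapP; exists l => //; rewrite mem_iota add0n Hl.
Qed.

Lemma pset_cat nu x y : pset nu (x ++ y) =i pset nu x ++ pset (foldl rho nu x) y.
Proof.
move=> m; rewrite mem_cat; apply/idP/orP.
  move/mem_pset => [l [Hl <-]]; rewrite take_cat.
  case: ltnP => Hx; first by left; apply/mem_pset; exists l.
  right; apply/mem_pset; exists (l - size x); rewrite foldl_cat; split => //.
  by rewrite ltn_subLR // -size_cat.
case=> /mem_pset [l [Hl <-]]; apply/mem_pset.
  by exists l; rewrite size_cat take_cat Hl (ltn_addr _ Hl).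
exists (size x + l); split; first by rewrite size_cat ltn_add2l.
rewrite take_cat ifN ?addKn ?foldl_cat //; by rewrite -leqNgt leq_addr.
Qed.

Lemma accS_eq s1 s2 : s1 =i s2 -> accS s1 -> accS s2.
Proof. by move=> H; apply: acc_set_ext => m; rewrite H. Qed.

Lemma mpath_word m1 m2 p : mpath rho m1 m2 p -> exists x, foldl rho m1 x = m2.
Proof.
case=> s [_ [Hp Hl]]; elim: s m1 Hp Hl => [|m s IH] m1 /=; first by move=> _ ->; exists [::].
case/andP => /existsP [a /eqP Ha] Hp Hl; have [x Hx] := IH _ Hp Hl.
by exists (a :: x); rewrite /= Ha.
Qed.

Lemma samelink m1 m2 : tau m1 = tau m2 -> exists x, foldl rho m1 x = m2.
Proof.
move=> Ht; case: (eqVneq m2 m1) => [->|Hne]; first by exists [::].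
have H := @Hlink m2 m1; apply: NNPP => Hn; apply: H; split => //; split => //; left.
by move=> p /mpath_word [x Hx]; apply: Hn; exists x.
Qed.

Lemma link m1 m2 : connect (edge A) (tau m1) (tau m2) -> exists x, foldl rho m1 x = m2.
Proof.
case/connectP => s; elim: s m1 => [|q s IH] m1 /=; first by move=> _ /esym /samelink.
case/andP => /existsP [a Ha] Hp Hl.
have [u [Hu1 Hu2]] := Hused Ha.
have [x1 Hx1] := samelink (m1 := m1) (m2 := mem u) (esym Hu1).
have [x2 Hx2] : exists x, foldl rho (mem (rcons u a)) x = m2.
  by apply: IH; rewrite /mem; rewrite /tstrat in Hu2; rewrite Hu2.
exists (x1 ++ a :: x2); rewrite foldl_cat Hx1 /= -Hx2 /mem -cats1 foldl_cat //.
Qed.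

Lemma run_connect (w : nat -> S) (r : nat -> Q) :
  (forall i, r i.+1 \in delta A (r i) (w i)) -> forall i j, i <= j -> connect (edge A) (r i) (r j).
Proof.
move=> Hr i j /subnK <-; elim: (j - i) => [|k IH]; first by rewrite add0n connect0.
apply: connect_trans IH _; rewrite addSn; apply: connect1; apply/existsP; exists (w (k + i)).
exact: Hr.
Qed.

Lemma step_delta u a : tau (rho (mem u) a) \in delta A (tau (mem u)) a.
Proof.
have [[_ Hs] _] := Hg (cat_w u (fun _ => a)).
have H0 := prefix_cat_w u (fun _ => a) 0.
have H1 := prefix_cat_w u (fun _ => a) 1.
rewrite addn0 cats0 in H0; rewrite addn1 in H1.
have := Hs (size u); rewrite /tstrat H1 H0 /cat_w ltnn foldl_cat.
done.
Qed.

Lemma init_g (a : S) : g [::] \in init A.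
Proof. by have [[]] := Hg (fun _ => a). Qed.

End Main.

Section Main2.
Variables (S Q : finType) (A : aut S Q) (M : finType) (m0 : M) (rho : M -> S -> M) (tau : M -> Q).
Local Notation g := (tstrat m0 rho tau).
Local Notation mem := (mem m0 rho).
Local Notation memrun := (memrun m0 rho).
Local Notation pset := (pset rho).
Local Notation accS := (accS A tau).
Local Notation memacc := (memacc A m0 rho tau).

Lemma take_prefix (X : Type) (F : nat -> X) l n : l <= n -> take l (prefix F n) = prefix F l.
Proof. by move/subnKC => <-; rewrite prefix_add take_size_cat // size_prefix. Qed.

Lemma memrun_add w i l : memrun w (i + l) = foldl rho (memrun w i) (prefix (fun k => w (i + k)) l).
Proof. by rewrite /memrun /mem prefix_add foldl_cat. Qed.

Lemma locate (St : Type) (P0 : seq S) (s0 : St) ext k :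
  (forall P s, 0 < size (ext P s).1) -> size P0 <= k ->
  exists s, size (stg P0 s0 ext s).1 <= k < size (stg P0 s0 ext s.+1).1.
Proof.
move=> HE Hk.
suff H : forall n, k < size (stg P0 s0 ext n).1 -> exists s, size (stg P0 s0 ext s).1 <= k < size (stg P0 s0 ext s.+1).1.
  apply: (H k.+1); exact: stg_size.
elim=> [|n IH] /=; first by rewrite ltnNge Hk.
move=> Hn; case: (ltnP k (size (stg P0 s0 ext n).1)) => H; first exact: IH.
by exists n; rewrite H.
Qed.

Lemma stage_inf (St : Type) (a0 : S) (P0 : seq S) (s0 : St) ext nu (C : seq M) :
  (forall P s, 0 < size (ext P s).1) -> mem P0 = nu ->
  (forall P s, mem P = nu -> foldl rho nu (ext P s).1 = nu /\ pset nu (ext P s).1 =i C) ->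
  forall m, inf_often (memrun (limw a0 P0 s0 ext)) m <-> m \in C.
Proof.
move=> HE H0 Hext.
have Hinv : forall s, mem (stg P0 s0 ext s).1 = nu.
  elim=> //= s IH; rewrite /mem foldl_cat; rewrite /mem in IH; rewrite IH; exact: (Hext _ _ IH).1.
have Hpos : forall s l, l < size (ext (stg P0 s0 ext s).1 (stg P0 s0 ext s).2).1 ->
   memrun (limw a0 P0 s0 ext) (size (stg P0 s0 ext s).1 + l) =
   foldl rho nu (take l (ext (stg P0 s0 ext s).1 (stg P0 s0 ext s).2).1).
  move=> s l Hl; rewrite /memrun (@limw_prefix _ _ a0 P0 s0 ext HE s.+1) /=.
    by rewrite take_cat ltnNge leq_addr /= addKn /mem foldl_cat -/(mem _) Hinv.
  by rewrite size_cat leq_add2l ltnW.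
move=> m; split.
  move=> Hm; have [k [Hk Hmk]] := Hm (size P0).
  have [s /andP [H1 H2]] := @locate _ P0 s0 ext k HE Hk.
  have Hkl : k = size (stg P0 s0 ext s).1 + (k - size (stg P0 s0 ext s).1) by rewrite subnKC.
  move: H2; rewrite /= size_cat {1}Hkl ltn_add2l => H2.
  rewrite -Hmk Hkl Hpos //.
  have := (Hext _ (stg P0 s0 ext s).2 (Hinv s)).2 (foldl rho nu (take (k - size (stg P0 s0 ext s).1) (ext (stg P0 s0 ext s).1 (stg P0 s0 ext s).2).1)).
  move=> <-; by apply/mem_pset; eexists; split; [exact: H2|].
move=> Hm n.
have := (Hext _ (stg P0 s0 ext n).2 (Hinv n)).2 m; rewrite Hm => /mem_pset [l [Hl Hfl]].
exists (size (stg P0 s0 ext n).1 + l); split; first by apply: leq_trans (stg_size _ _ _ _) (leq_addr _ _).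
by rewrite Hpos.
Qed.

Lemma inf_loop w nu : inf_often (memrun w) nu ->
  exists i z, memrun w i = nu /\ 0 < size z /\ foldl rho nu z = nu /\
     (forall m, m \in pset nu z <-> inf_often (memrun w) m).
Proof.
move=> Hnu.
have [N HN] := Ev (memrun w).
have [i [Hi Hfi]] := Hnu N.
pose pm m := epsilon (inhabits 0) (fun k => i <= k /\ (memrun w) k = m).
have Hpm : forall m, inf_often (memrun w) m -> i <= pm m /\ (memrun w) (pm m) = m.
  move=> m Hm; apply: (epsilon_spec (inhabits 0) (fun k => i <= k /\ (memrun w) k = m)); exact: Hm.
have [j [Hj Hfj]] := Hnu (\max_(m : M) pm m).+1.
have Hij : i < j.
  apply: leq_trans Hj; rewrite ltnS; apply: leq_trans (@leq_bigmax _ pm nu).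
  exact: (Hpm _ Hnu).1.
pose z := prefix (fun k => w (i + k)) (j - i).
have Hz : forall l, l <= j - i -> foldl rho nu (take l z) = (memrun w) (i + l).
  by move=> l Hl; rewrite take_prefix // memrun_add Hfi.
exists i, z; split => //; split; first by rewrite size_prefix subn_gt0.
split; first by rewrite -(take_size z) Hz size_prefix // subnKC ?(ltnW Hij).
move=> m; split.
  move/mem_pset => [l [Hl <-]]; rewrite Hz; last by rewrite size_prefix in Hl; apply: ltnW.
  apply: HN; exact: leq_trans Hi (leq_addr _ _).
move=> Hm; have [H1 H2] := Hpm _ Hm; apply/mem_pset; exists (pm m - i).
rewrite size_prefix; split.
  rewrite ltn_sub2rE //; apply: leq_trans Hj; rewrite ltnS; exact: (@leq_bigmax _ pm m).
rewrite Hz ?subnKC //; rewrite leq_sub2r // ltnW //; apply: leq_trans Hj; rewrite ltnS; exact: (@leq_bigmax _ pm m).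
Qed.

Definition bad nu := (exists u, mem u = nu) /\
  exists z, 0 < size z /\ foldl rho nu z = nu /\ ~ accS (pset nu z).

Lemma rej_bad w : ~ memacc w -> forall n, exists k, n <= k /\ bad (memrun w k).
Proof.
move=> Hw.
have [nu [_ Hnu]] := PH (f := memrun w) (P := fun _ => True) (fun n => ex_intro _ n (conj (leqnn n) I)).
have [i [z [Hi [Hz [Hl Hp]]]]] := inf_loop Hnu.
have Hb : bad nu.
  split; first by exists (prefix w i).
  exists z; split => //; split => // Ha; apply: Hw.
  by apply: acc_set_ext Ha => m; apply: Hp.
move=> n; have [k [Hk Hmk]] := Hnu n; exists k; split => //; by rewrite Hmk.
Qed.

End Main2.

Fixpoint xpow (S : Type) (x : seq S) n := if n is n'.+1 then xpow x n' ++ x else [::].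

Section Main3.
Variables (S Q : finType) (A : aut S Q) (M : finType) (m0 : M) (rho : M -> S -> M) (tau : M -> Q).
Local Notation g := (tstrat m0 rho tau).
Local Notation mem := (mem m0 rho).
Local Notation memrun := (memrun m0 rho).
Local Notation pset := (pset rho).
Local Notation accS := (accS A tau).
Local Notation memacc := (memacc A m0 rho tau).
Hypothesis Hg : gfg_strategy A g.
Variables (Q' : finType) (B : aut S Q').
Hypothesis HBw : weak B.
Hypothesis HBg : GFG B.
Hypothesis HBl : forall w, lang B w <-> lang A w.

Lemma xpow_loop nu x n : foldl rho nu x = nu -> foldl rho nu (xpow x n) = nu.
Proof. by move=> Hx; elim: n => //= n IH; rewrite foldl_cat IH. Qed.

Lemma pset_xpow nu x n : foldl rho nu x = nu -> pset nu (xpow x n.+1) =i pset nu x.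
Proof.
move=> Hx; elim: n => [|n IH] m //=.
rewrite pset_cat mem_cat; change (xpow x n ++ x) with (xpow x n.+1).
by rewrite xpow_loop // IH orbb.
Qed.

Lemma size_xpow (X : Type) (x : seq X) n : size (xpow x n) = n * size x.
Proof. by elim: n => //= n IH; rewrite size_cat IH mulSn addnC. Qed.

Lemma lemmaW u0 x y : 0 < size x -> foldl rho (mem u0) x = mem u0 -> foldl rho (mem u0) y = mem u0 ->
  (accS (pset (mem u0) x) <-> accS (pset (mem u0) (x ++ y))).
Proof.
set nu := mem u0 => Hx Lx.
case: y => [|b y'] Ly; first by rewrite cats0.
set y := b :: y' in Ly *.
have [h Hh] := HBg.
have HBw' := HBw; move: HBw'; rewrite /weak; case HBc: (acc B) => [ps|ps|F] // HBw'.
pose a0 := b.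
pose xext := fun (_ : seq S) (_ : unit) => (x, tt).
pose xw P := limw a0 P tt xext.
have HEx : forall P s, 0 < size (xext P s).1 by [].
have XA : forall P, mem P = nu -> (memacc (xw P) <-> accS (pset nu x)).
  move=> P HP; have XI := @stage_inf _ _ m0 rho _ a0 P tt xext nu (pset nu x) HEx HP.
  have /XI {}XI : forall P s, mem P = nu -> foldl rho nu (xext P s).1 = nu /\ pset nu (xext P s).1 =i pset nu x by [].
  by split; apply: acc_set_ext => m; rewrite XI.
have Xstg : forall P n, (stg P tt xext n).1 = P ++ xpow x n.
  by move=> P; elim=> [|n IH] /=; rewrite ?cats0 // IH catA.
have Xpre : forall P n k, k <= size P + n * size x -> prefix (xw P) k = take k (P ++ xpow x n).
  move=> P n k Hk; rewrite /xw (@limw_prefix _ _ a0 P tt xext HEx n) Xstg //.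
  by rewrite size_cat size_xpow.
pose hrun w := fun k => h (prefix w k).
have Hacc : forall w, accepting B (hrun w) <-> exists f, f \in F /\ inf_often (hrun w) f.
  by move=> w; rewrite /accepting HBc.
have LB : forall w, lang A w <-> accepting B (hrun w).
  move=> w; split; first by move/HBl/((Hh w).2).
  by move=> H; apply/HBl; exists (hrun w); split => //; exact: (Hh w).1.
have Mix : forall nf : seq S -> nat,
   let ext := fun P (_ : unit) => (xpow x (nf P).+1 ++ y, tt) in
   let W := limw a0 u0 tt ext in
   (memacc W <-> accS (pset nu (x ++ y))) /\
   (forall s, mem (stg u0 tt ext s).1 = nu) /\
   (forall s k, k <= size (stg u0 tt ext s).1 + (nf (stg u0 tt ext s).1).+1 * size x ->
        prefix W k = prefix (xw (stg u0 tt ext s).1) k).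
  move=> nf ext W.
  have HE : forall P s, 0 < size (ext P s).1 by move=> P s; rewrite /= size_cat addnS.
  have Hinv : forall s, mem (stg u0 tt ext s).1 = nu.
    have hb : forall n, foldl rho nu (xpow x n ++ y) = nu by move=> n; rewrite foldl_cat xpow_loop.
    elim=> // s IH; rewrite /mem /= foldl_cat; rewrite /mem in IH.
    by rewrite IH; exact: (hb (nf (stg u0 tt ext s).1).+1).
  split.
    have WI := @stage_inf _ _ m0 rho _ a0 u0 tt ext nu (pset nu x ++ pset nu y) HE (erefl _).
    have /WI {}WI : forall P s, mem P = nu -> foldl rho nu (ext P s).1 = nu /\
                      pset nu (ext P s).1 =i pset nu x ++ pset nu y.
      move=> P s _; change ((ext P s).1) with (xpow x (nf P).+1 ++ y).
      rewrite foldl_cat xpow_loop //; split => // m.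
      by rewrite pset_cat mem_cat xpow_loop // pset_xpow // mem_cat.
    split; apply: acc_set_ext => m; rewrite WI pset_cat mem_cat Lx mem_cat //.
  split => // s k Hk.
  rewrite /W (@limw_prefix _ _ a0 u0 tt ext HE s.+1); last first.
    by apply: leq_trans Hk _; rewrite size_cat leq_add2l size_cat size_xpow leq_addr.
  rewrite (Xpre _ (nf (stg u0 tt ext s).1).+1) //.
  change (stg u0 tt ext s.+1).1 with ((stg u0 tt ext s).1 ++ (xpow x (nf (stg u0 tt ext s).1).+1 ++ y)).
  by rewrite catA takel_cat // size_cat size_xpow.
split => Hxa.
- apply: NNPP => Hn.
  pose nf P := epsilon (inhabits 0) (fun n => exists k, size P <= k < size P + n * size x /\ hrun (xw P) k \in F).
  have Hnf : forall P, mem P = nu -> exists k, size P <= k < size P + nf P * size x /\ hrun (xw P) k \in F.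
    move=> P HP; apply: (epsilon_spec (inhabits 0) (fun n => exists k, size P <= k < size P + n * size x /\ hrun (xw P) k \in F)).
    have /LB /Hacc [f [Hf Hi]] : lang A (xw P) by apply/lang_memacc => //; apply/XA.
    have [k [Hk Hfk]] := Hi (size P); exists k.+1, k; rewrite Hk /= Hfk; split => //.
    exact: leq_trans (leq_pmulr _ Hx) (leq_addl _ _).
  have [HWa [Hinv Hpre]] := Mix nf.
  apply: Hn; apply/HWa/lang_memacc => //; apply/LB/Hacc.
  set W := limw _ _ _ _.
  have := @PH _ (hrun W) (fun q => q \in F); case.
    move=> N; have [k [/andP [Hk1 Hk2] HkF]] := Hnf _ (Hinv N); exists k; split.
      apply: leq_trans Hk1; apply: (@stg_size _ _ u0 tt) => P s /=; by rewrite size_cat addnS.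
    rewrite /hrun (Hpre N) //; apply: ltnW; apply: leq_trans Hk2 _; by rewrite leq_add2l leq_mul2r leqnSn orbT.
  by move=> f [Hf Hi]; exists f.
- apply: NNPP => Hnx.
  pose nf P := epsilon (inhabits 0) (fun n => exists k, size P <= k < size P + n * size x /\ hrun (xw P) k \notin F).
  have Hnf : forall P, mem P = nu -> exists k, size P <= k < size P + nf P * size x /\ hrun (xw P) k \notin F.
    move=> P HP; apply: (epsilon_spec (inhabits 0) (fun n => exists k, size P <= k < size P + n * size x /\ hrun (xw P) k \notin F)).
    apply: NNPP => Hn.
    have : lang A (xw P).
      apply/LB/Hacc.
      have := @PH _ (hrun (xw P)) (fun q => q \in F); case.
        move=> N; exists (maxn N (size P)); split; first exact: leq_maxl.
        apply: NNPP => HF; apply: Hn; exists (maxn N (size P)).+1, (maxn N (size P)).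
        split; last exact/negP.
        rewrite leq_maxr /=; exact: leq_trans (leq_pmulr _ Hx) (leq_addl _ _).
      by move=> f [Hf Hi]; exists f.
    by move/(lang_memacc Hg)/(XA _ HP).
  have [HWa [Hinv Hpre]] := Mix nf.
  set W := limw _ _ _ _ in HWa Hpre.
  have /(lang_memacc Hg) /LB /Hacc [f [Hf Hfi]] : memacc W by apply/HWa.
  have [bb [Hb Hbi]] : exists bb, bb \notin F /\ inf_often (hrun W) bb.
    apply: PH => N; have [k [/andP [Hk1 Hk2] HkF]] := Hnf _ (Hinv N); exists k; split.
      apply: leq_trans Hk1; apply: (@stg_size _ _ u0 tt) => P s /=; by rewrite size_cat addnS.
    rewrite /hrun (Hpre N) //; apply: ltnW; apply: leq_trans Hk2 _; by rewrite leq_add2l leq_mul2r leqnSn orbT.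
  have Hrun : forall i, hrun W i.+1 \in delta B (hrun W i) (W i) by exact: (Hh W).1.2.
  have [i [_ Hi]] := Hfi 0.
  have [j [Hij Hj]] := Hbi i.
  have [k [Hjk Hk]] := Hfi j.
  have Hfb : bb \in scc B f.
    rewrite inE; apply/andP; split.
      by rewrite -Hi -Hj; exact: (run_connect_gen Hrun Hij).
    by rewrite -Hk -Hj; exact: (run_connect_gen Hrun Hjk).
  case: (HBw' f) => [/subsetP /(_ _ Hfb)|Hd]; first by rewrite (negbTE Hb).
  have Hff : f \in scc B f by rewrite inE connect0.
  by rewrite (disjointFr Hd Hff) in Hf.
Qed.
End Main3.

Definition cb (P : Prop) : bool := if excluded_middle_informative P then true else false.
Lemma cbP (P : Prop) : cb P <-> P.
Proof. by rewrite /cb; case: excluded_middle_informative. Qed.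

Section Main4.
Variables (S Q : finType) (A : aut S Q) (M : finType) (m0 : M) (rho : M -> S -> M) (tau : M -> Q).
Local Notation g := (tstrat m0 rho tau).
Local Notation mem := (mem m0 rho).
Local Notation memrun := (memrun m0 rho).
Local Notation pset := (pset rho).
Local Notation accS := (accS A tau).
Local Notation memacc := (memacc A m0 rho tau).
Local Notation bad := (bad A m0 rho tau).
Hypothesis Hg : gfg_strategy A g.
Hypothesis Hused : forall q a q', q' \in delta A q a -> exists u, g u = q /\ g (rcons u a) = q'.
Hypothesis Hlink : forall m m', ~ replaceable (acc A) rho tau m m'.
Variables (Q' : finType) (B : aut S Q').
Hypothesis HBw : weak B.
Hypothesis HBg : GFG B.
Hypothesis HBl : forall w, lang B w <-> lang A w.

Local Notation lemmaW := (lemmaW Hg HBw HBg HBl).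

Lemma loop_swap nu z z' : foldl rho nu z = nu -> foldl rho nu z' = nu ->
  pset nu (z ++ z') =i pset nu (z' ++ z).
Proof. by move=> H1 H2 m; rewrite !pset_cat !mem_cat H1 H2 orbC. Qed.

Lemma acc_notbad w nu : memacc w -> inf_often (memrun w) nu -> bad nu -> False.
Proof.
move=> Hw Hnu [[u Hu] [z' [Hz' [Lz' Hna]]]].
have [i [z [Hi [Hz [Lz Hp]]]]] := inf_loop Hnu.
have Ha : accS (pset nu z) by apply: acc_set_ext Hw => m; rewrite Hp.
rewrite -Hu in Lz Lz' Ha Hna.
have /(lemmaW Hz Lz Lz') H1 := Ha.
apply: Hna; apply/(lemmaW Hz' Lz' Lz); apply: accS_eq H1; exact: loop_swap.
Qed.

Definition goodq q := exists u z, tau (mem u) = q /\ 0 < size z /\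
  foldl rho (mem u) z = mem u /\ accS (pset (mem u) z).
Definition alpha : {set Q} := [set q | cb (goodq q)].
Lemma inalpha q : q \in alpha <-> goodq q.
Proof. by rewrite inE cbP. Qed.

Lemma acc_visits w : memacc w -> exists q, q \in alpha /\ inf_often (fun n => g (prefix w n)) q.
Proof.
move=> Hw.
have [nu [_ Hnu]] := PH (f := memrun w) (P := fun _ => True) (fun n => ex_intro _ n (conj (leqnn n) I)).
have [i [z [Hi [Hz [Lz Hp]]]]] := inf_loop Hnu.
exists (tau nu); split.
  apply/inalpha; exists (prefix w i), z; rewrite /memrun in Hi; rewrite Hi; do 3!split => //.
  by apply: acc_set_ext Hw => m; rewrite Hp.
move=> n; have [k [Hk Hmk]] := Hnu n; exists k; split => //; by rewrite /tstrat -Hmk.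
Qed.

Lemma connect_mem q1 q2 : connect (edge A) q1 q2 -> q1 != q2 -> exists u, tau (mem u) = q2.
Proof.
case/connectP => s; case/lastP: s => [|s q] /=; first by move=> _ ->; rewrite eqxx.
rewrite rcons_path last_rcons => /andP [_ /existsP [a Ha]] -> _.
by have [u [_ Hu]] := Hused Ha; exists (rcons u a).
Qed.

Lemma good_transfer q1 q2 : goodq q1 -> connect (edge A) q1 q2 -> connect (edge A) q2 q1 -> goodq q2.
Proof.
move=> [u1 [z [Hq1 [Hz [Lz Ha]]]]] H12 H21.
case: (eqVneq q1 q2) => [<-|Hne]; first by exists u1, z.
have [u2 Hu2] := connect_mem H12 Hne.
have [p12 L12] : exists x, foldl rho (mem u1) x = mem u2.
  by apply: (link Hused Hlink); rewrite Hq1 Hu2.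
have [p21 L21] : exists x, foldl rho (mem u2) x = mem u1.
  by apply: (link Hused Hlink); rewrite Hq1 Hu2.
have Ld : foldl rho (mem u1) (p12 ++ p21) = mem u1 by rewrite foldl_cat L12.
have /(lemmaW Hz Lz Ld) Ha2 := Ha.
exists u2, (p21 ++ z ++ p12); split => //; split; first by rewrite !size_cat addnCA ltn_addr.
split; first by rewrite !foldl_cat L21 Lz.
apply: accS_eq Ha2 => m; rewrite !pset_cat !mem_cat ?foldl_cat ?L21 ?Lz ?L12 ?pset_cat ?mem_cat ?L21 ?Lz ?L12.
by case: (m \in pset (mem u1) z); case: (m \in pset (mem u1) p12); case: (m \in pset (mem u2) p21).
Qed.

Lemma alpha_weak : forall q, scc A q \subset alpha \/ [disjoint scc A q & alpha].
Proof.
move=> q; case: (classic (exists q1, q1 \in scc A q /\ q1 \in alpha)) => [[q1 [H1 H2]]|Hn].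
  left; apply/subsetP => q2 H3; apply/inalpha; move: H1 H3; rewrite !inE => /andP [H1 H1'] /andP [H3 H3'].
  apply: (good_transfer (q1 := q1)); first exact/inalpha.
    exact: connect_trans H1' H3.
  exact: connect_trans H3' H1.
right; rewrite disjoint_subset; apply/subsetP => q2 H2; rewrite inE /=.
by apply/negP => H3; apply: Hn; exists q2.
Qed.

End Main4.

Section SD.
Variables (S Q : finType) (A : aut S Q) (M : finType) (m0 : M) (rho : M -> S -> M) (tau : M -> Q).
Local Notation g := (tstrat m0 rho tau).
Local Notation mem := (mem m0 rho).
Hypothesis Hg : gfg_strategy A g.
Hypothesis Hused : forall q a q', q' \in delta A q a -> exists u, g u = q /\ g (rcons u a) = q'.

Definition lfrom q (t : nat -> S) := exists r', r' 0 = q /\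
  (forall i, r' i.+1 \in delta A (r' i) (t i)) /\ accepting A r'.

Lemma inf_shift2 (T : Type) (r r' : nat -> T) n q :
  (forall i, r (i + n) = r' i) -> (inf_often r q <-> inf_often r' q).
Proof.
move=> H; have E : (fun i => r (i + n)) = r' by apply: functional_extensionality.
by split => [/(inf_shift r n)|H']; [rewrite E | apply/(inf_shift r n); rewrite E].
Qed.

Lemma glue w r n r' : r 0 \in init A -> (forall i, r i.+1 \in delta A (r i) (w i)) ->
  r' 0 = r n -> (forall i, r' i.+1 \in delta A (r' i) (w (i + n))) -> accepting A r' -> lang A w.
Proof.
move=> H0 Hr H0' Hr' Ha.
exists (fun i => if i < n then r i else r' (i - n)); split; first split.
- by case: (posnP n) => [Hn|Hn] //; rewrite Hn subnn H0' Hn.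
- move=> i; case: (ltnP i.+1 n) => H1.
    by rewrite (ltnW H1); exact: Hr.
  case: (ltnP i n) => H2.
    have Hn : n = i.+1 by apply/eqP; rewrite eqn_leq H1 H2.
    by subst n; rewrite subnn H0'; exact: Hr.
  by rewrite subSn // ; have := Hr' (i - n); rewrite subnK.
- rewrite /accepting; apply: acc_set_ext Ha => q; symmetry; apply: (inf_shift2 (n := n)) => i.
  by rewrite ltnNge leq_addl /= addnK.
Qed.

Lemma SD1f u t : lang A (cat_w u t) -> lfrom (g u) t.
Proof.
move=> /((Hg _).2) Ha.
exists (fun i => g (prefix (cat_w u t) (size u + i))); split.
  by rewrite addn0 -{3}(cats0 u) -(prefix_cat_w u t 0) addn0.
split.
  move=> i; have := (Hg (cat_w u t)).1.2 (size u + i).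
  by rewrite addnS /cat_w ltnNge leq_addr /= addKn.
rewrite /accepting; apply: acc_set_ext Ha => q; apply: (inf_shift2 (n := size u)) => i.
by rewrite addnC.
Qed.

Lemma SD1b u t : lfrom (g u) t -> lang A (cat_w u t).
Proof.
case=> r' [H0 [Hr Ha]].
apply: (@glue _ (fun n => g (prefix (cat_w u t) n)) (size u) r').
- exact: (Hg _).1.1.
- exact: (Hg _).1.2.
- by rewrite H0 -(addn0 (size u)) prefix_cat_w cats0.
- by move=> i; rewrite /cat_w ltnNge leq_addl /= addnK.
- done.
Qed.

Lemma lfrom_ext q t t' : (forall i, t i = t' i) -> lfrom q t -> lfrom q t'.
Proof. by move=> H; have -> : t = t' by apply: functional_extensionality. Qed.

Lemma lang_ext w w' : (forall i, w i = w' i) -> lang A w -> lang A w'.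
Proof. by move=> H; have -> : w = w' by apply: functional_extensionality. Qed.

Lemma SD2 q a p t : p \in delta A q a -> lfrom q (cat_w [:: a] t) -> lfrom p t.
Proof.
move=> /Hused [u [Hu Hp]]; rewrite -Hu -Hp => /SD1b H; apply: SD1f.
apply: lang_ext H => i; by rewrite -cats1 cat_w_cat.
Qed.

Fixpoint vp (q : Q) (l : seq (S * Q)) (q' : Q) : Prop :=
  match l with [::] => q = q' | p :: l' => p.2 \in delta A q p.1 /\ vp p.2 l' q' end.

Lemma vp_cat a l1 b l2 c : vp a l1 b -> vp b l2 c -> vp a (l1 ++ l2) c.
Proof. by elim: l1 a => [|p l1 IH] a /=; [move=> -> | case=> H1 H2 H3; split => //; apply: IH]. Qed.

Lemma path_sd q l q' t : vp q l q' -> lfrom q (cat_w (map fst l) t) -> lfrom q' t.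
Proof.
elim: l q => [|[a p] l IH] q /=.
  by move=> ->; apply: lfrom_ext => i; rewrite /cat_w /= subn0.
case=> H1 H2 H3; apply: (IH p H2); apply: (SD2 H1).
by apply: lfrom_ext H3 => i; rewrite -cat_w_cat.
Qed.

Definition stv (d : S * Q) (a : Q) (l : seq (S * Q)) (i : nat) : Q :=
  if i is i'.+1 then (nth d l i').2 else a.

Lemma stv_cat d a l1 l2 i : stv d a (l1 ++ l2) (size l1 + i) = stv d (stv d a l1 (size l1)) l2 i.
Proof.
case: i => [|i] /=; rewrite ?addn0.
  by case: l1 => //= p l1; rewrite -cat_cons nth_cat /= ltnSn.
by rewrite addnS /= nth_cat ltnNge leq_addr /= addKn.
Qed.

Lemma vp_end d a l c : vp a l c -> stv d a l (size l) = c.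
Proof.
elim: l a => [|p l IH] a /=; first by [].
case=> _ H; case: l IH H => [|p' l] IH H /=; first by rewrite H.
by have := IH _ H.
Qed.

Lemma vp_step d a l c i : vp a l c -> i < size l -> stv d a l i.+1 \in delta A (stv d a l i) (nth d l i).1.
Proof.
elim: l a i => [|p l IH] a i //=; case=> H1 H2; case: i => [|i] //= Hi.
have := IH _ _ H2 Hi; by case: i Hi.
Qed.

Fixpoint ypr (nu : M) (z : seq S) : seq (S * Q) :=
  if z is a :: z' then (a, tau (rho nu a)) :: ypr (rho nu a) z' else [::].

Lemma ypr_fst nu z : map fst (ypr nu z) = z.
Proof. by elim: z nu => //= a z IH nu; rewrite IH. Qed.

Lemma size_ypr nu z : size (ypr nu z) = size z.
Proof. by rewrite -(size_map fst) ypr_fst. Qed.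

Lemma ypr_vp u z : vp (tau (mem u)) (ypr (mem u) z) (tau (foldl rho (mem u) z)).
Proof.
elim: z u => //= a z IH u; split; first exact: step_delta.
have -> : rho (mem u) a = mem (rcons u a) by rewrite /mem -cats1 foldl_cat.
exact: IH.
Qed.

Lemma ypr_states nu z p : p \in ypr nu z -> exists l, 0 < l <= size z /\ p.2 = tau (foldl rho nu (take l z)).
Proof.
elim: z nu => //= a z IH nu; rewrite inE => /orP [/eqP -> | /IH [l [/andP [H1 H2] H3]]].
  by exists 1; rewrite /= take0.
by exists l.+1; split; [rewrite /= ltnS | ].
Qed.

Lemma ypr_stv d nu z l : l <= size z -> stv d (tau nu) (ypr nu z) l = tau (foldl rho nu (take l z)).
Proof.
elim: z nu l => [|a z IH] nu [|l] //= Hl.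
case: l Hl => [|l] Hl //=; first by rewrite take0.
by have := IH (rho nu a) l.+1 Hl.
Qed.

Fixpoint zs (w : nat -> S) (r : nat -> Q) n d : seq (S * Q) :=
  if d is d'.+1 then (w n, r n.+1) :: zs w r n.+1 d' else [::].

Lemma zs_vp w r n d : (forall i, r i.+1 \in delta A (r i) (w i)) -> vp (r n) (zs w r n d) (r (n + d)).
Proof. move=> Hr; elim: d n => [|d IH] n /=; first by rewrite addn0. by split; [apply: Hr | rewrite addnS -addSn; apply: IH]. Qed.

Lemma zs_fst w r n d : map fst (zs w r n d) = prefix (fun i => w (i + n)) d.
Proof.
elim: d n => //= d IH n; rewrite IH.
rewrite /prefix /mkseq /= -(addn0 1) iotaDl -map_comp; congr (_ :: _).
by apply: eq_map => i /=; rewrite add1n addSnnS.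
Qed.

Lemma size_zs w r n d : size (zs w r n d) = d.
Proof. by elim: d n => //= d IH n; rewrite IH. Qed.

Lemma zs_states w r n d p : p \in zs w r n d -> exists i, n <= i < n + d /\ p.2 = r i.+1.
Proof.
elim: d n => //= d IH n; rewrite inE => /orP [/eqP -> | /IH [i [/andP [H1 H2] H3]]].
  by exists n; rewrite leqnn addnS ltnS leq_addr.
by exists i; rewrite H3 addnS -addSn H2 andbT ltnW.
Qed.

End SD.

Section Main5.
Variables (S Q : finType) (A : aut S Q) (M : finType) (m0 : M) (rho : M -> S -> M) (tau : M -> Q).
Local Notation g := (tstrat m0 rho tau).
Local Notation mem := (mem m0 rho).
Local Notation memrun := (memrun m0 rho).
Local Notation pset := (pset rho).
Local Notation accS := (accS A tau).
Local Notation memacc := (memacc A m0 rho tau).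
Local Notation bad := (bad A m0 rho tau).
Hypothesis Hg : gfg_strategy A g.
Hypothesis Hused : forall q a q', q' \in delta A q a -> exists u, g u = q /\ g (rcons u a) = q'.
Hypothesis Hlink : forall m m', ~ replaceable (acc A) rho tau m m'.
Variables (Q' : finType) (B : aut S Q').
Hypothesis HBw : weak B.
Hypothesis HBg : GFG B.
Hypothesis HBl : forall w, lang B w <-> lang A w.

Local Notation lemmaW := (lemmaW Hg HBw HBg HBl).
Local Notation alpha := (alpha A m0 rho tau).

Lemma cover u x (L : seq Q) : 0 < size x -> foldl rho (mem u) x = mem u ->
  (forall q', q' \in L -> connect (edge A) (tau (mem u)) q' /\ connect (edge A) q' (tau (mem u)) /\
       exists u', tau (mem u') = q') ->
  exists z, foldl rho (mem u) z = mem u /\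
     forall q', q' \in L -> exists m, m \in pset (mem u) z /\ tau m = q'.
Proof.
move=> Hx Lx; elim: L => [|q' L IH] HL; first by exists [::].
have [z [Lz Hz]] : exists z, foldl rho (mem u) z = mem u /\
     forall q', q' \in L -> exists m, m \in pset (mem u) z /\ tau m = q'.
  by apply: IH => q'' Hq''; apply: HL; rewrite inE Hq'' orbT.
have [H1 [H2 [u' Hu']]] := HL q' (mem_head _ _).
have [p1 L1] : exists p, foldl rho (mem u) p = mem u' by apply: (link Hused Hlink); rewrite Hu'.
have [p2 L2] : exists p, foldl rho (mem u') p = mem u by apply: (link Hused Hlink); rewrite Hu'.
have Lc : foldl rho (mem u) (p1 ++ p2 ++ x) = mem u by rewrite !foldl_cat L1 L2 Lx.
exists (z ++ p1 ++ p2 ++ x); split; first by rewrite foldl_cat Lz.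
move=> q''; rewrite inE => /orP [/eqP ->|/Hz [m [Hm Htm]]].
  exists (mem u'); split => //; rewrite pset_cat mem_cat Lz; apply/orP; right.
  apply/mem_pset; exists (size p1); split.
    by rewrite !size_cat -{1}(addn0 (size p1)) ltn_add2l addn_gt0 Hx orbT.
  by rewrite take_size_cat.
by exists m; split => //; rewrite pset_cat mem_cat Hm.
Qed.

Lemma sub_lang w r : is_run A w r -> (exists q, q \in alpha /\ inf_often r q) -> lang A w.
Proof.
move=> [Hr0 Hr] [q [/inalpha [u [x [Hq [Hx [Lx Hax]]]]] Hqi]].
set mu := mem u in Hq Lx Hax.
apply: NNPP => Hw.
pose a0 := w 0.
have [N0 HN0] := Ev r.
have Hinfmem : forall q', inf_often r q' -> connect (edge A) (tau mu) q' /\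
     connect (edge A) q' (tau mu) /\ exists u', tau (mem u') = q'.
  move=> q' Hq'; have [i [_ Hri]] := Hqi 0; have [j [Hij Hrj]] := Hq' i.+1.
  have [k [Hjk Hrk]] := Hqi j.
  split; first by rewrite Hq -Hri -Hrj; apply: (run_connect_gen Hr); exact: ltnW.
  split; first by rewrite Hq -Hrk -Hrj; exact: (run_connect_gen Hr).
  have Hj : j = j.-1.+1 by rewrite prednK // (leq_ltn_trans _ Hij).
  have := Hr j.-1; rewrite -Hj => /Hused [u' [_ Hu']].
  by exists (rcons u' (w j.-1)); rewrite -Hrj -Hu'.
pose L := [seq q' <- enum Q | cb (inf_often r q')].
have [z [Lz Hz]] := @cover u x L Hx Lx (fun q' Hq' => Hinfmem q' (proj1 (cbP _) (proj1 (andP (eq_ind _ is_true Hq' _ (mem_filter _ _ _)))))).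
pose y := x ++ z.
have Ly : foldl rho mu y = mu by rewrite foldl_cat Lx Lz.
have Hy : 0 < size y by rewrite size_cat ltn_addr.
have Hay : accS (pset mu y) by apply/(lemmaW Hx Lx Lz).
pose T q' := exists m, m \in pset mu y /\ tau m = q'.
have HIT : forall q', inf_often r q' -> T q'.
  move=> q' Hq'; have [|m [Hm Htm]] := Hz q'.
    by rewrite mem_filter mem_enum andbT; apply/cbP.
  by exists m; split => //; rewrite pset_cat mem_cat Lx Hm orbT.
have Htail : forall n, r n = q -> ~ lfrom A q (fun i => w (i + n)).
  move=> n Hn [r' [H0 [Hr' Ha]]]; apply: Hw; apply: (glue Hr0 Hr (n := n) (r' := r')) => //.
  by rewrite H0 Hn.
pose P0 := ypr rho tau m0 u.
have VP0 : vp A (tau m0) P0 q by rewrite -Hq; exact: (@ypr_vp _ _ _ _ m0 rho tau Hg [::] u).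
pose Yb := ypr rho tau mu y.
have VYb : vp A q Yb q.
  have := (@ypr_vp _ _ _ _ m0 rho tau Hg u y); by rewrite -/mu Ly Hq.
have TYb : forall p, p \in Yb -> T p.2.
  move=> p /ypr_states [l [/andP [Hl1 Hl2] ->]].
  case: (ltnP l (size y)) => Hl.
    by exists (foldl rho mu (take l y)); split => //; apply/mem_pset; exists l.
  have -> : l = size y by apply/eqP; rewrite eqn_leq Hl2 Hl.
  by exists mu; rewrite take_size Ly; split => //; apply/mem_pset; exists 0; rewrite take0.
pose Inv (Pn : seq (S * Q) * nat) := (exists Bl, Pn.1 = P0 ++ Bl /\ vp A q Bl q /\
    forall p, p \in Bl -> T p.2) /\ r Pn.2 = q /\ N0 <= Pn.2.
pose spec (P : seq (S * Q)) (n n' : nat) := n < n' /\ r n' = q /\ exists k, size P <= k <= size P + (n' - n) /\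
    bad (memrun (cat_w (map fst P) (fun i => w (i + n))) k).
pose nxt (P : seq (S * Q)) (n : nat) := epsilon (inhabits 0) (spec P n).
have Hnxt : forall P n, Inv (P, n) -> spec P n (nxt P n).
  move=> P n [[Bl [/= HP [VB TB]]] [/= Hrn HNn]]; apply: epsilon_spec.
  have Hna : ~ memacc (cat_w (map fst P) (fun i => w (i + n))).
    move/(lang_memacc Hg) => H; apply: (Htail n Hrn); apply: (path_sd Hg Hused VB).
    rewrite -Hq; apply: (SD1f Hg); apply: (lang_ext _ H) => i.
    by rewrite HP map_cat ypr_fst cat_w_cat.
  have [k [Hk Hbk]] := rej_bad Hna (size P).
  have [n' [Hn' Hrn']] := Hqi (maxn n.+1 (n + (k - size P))).
  exists n'; split; first by apply: leq_trans Hn'; rewrite leq_maxl.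
  split => //; exists k; rewrite Hk /=; split => //.
  rewrite -leq_subLR leq_subRL; last by apply: leq_trans Hn'; apply: leq_trans (leq_maxl _ _); exact: leqnSn.
  by apply: leq_trans Hn'; rewrite leq_maxr.
pose ext (P : seq (S * Q)) (n : nat) := (zs w r n (nxt P n - n) ++ Yb, nxt P n).
have HE : forall P n, 0 < size (ext P n).1 by move=> P n; rewrite size_cat size_ypr ltn_addl.
have [n0 [Hn0 Hrn0]] := Hqi N0.
pose stgs := stg P0 n0 ext.
have Hinv : forall s, Inv (stgs s).
  elim=> [|s IH].
    split => //; exists [::]; rewrite cats0; split => //.
  have [Hs1 [Hs2 Hs3]] := Hnxt _ _ IH.
  case: IH => [[Bl [HP [VB TB]]] [Hrn HNn]].
  rewrite /stgs /= -/stgs; split; last by split => //; apply: leq_trans HNn (ltnW Hs1).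
  exists (Bl ++ zs w r (stgs s).2 (nxt (stgs s).1 (stgs s).2 - (stgs s).2) ++ Yb).
  split; first by rewrite HP -catA.
  split.
    apply: (vp_cat VB); apply: vp_cat VYb; rewrite -{1}Hrn -Hs2.
    by rewrite -{2}(subnKC (ltnW Hs1)); apply: zs_vp.
  move=> p; rewrite !mem_cat => /orP [/TB //|/orP [/zs_states [i [/andP [Hi1 _] ->]]|/TYb //]].
  apply: HIT; apply: HN0; apply: leq_trans HNn (leq_trans Hi1 (leqnSn _)).
have Hsz : forall s, s <= size (stgs s).1 by move=> s; exact: stg_size.
pose Wp := limw (a0, q) P0 n0 ext.
pose W i := (Wp i).1.
pose r' i := if i is i'.+1 then (Wp i').2 else tau m0.
have VP : forall s, vp A (tau m0) (stgs s).1 q.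
  move=> s; have [[Bl [HP [VB _]]] _] := Hinv s; rewrite HP; exact: vp_cat VP0 VB.
have Hr'stv : forall s i, i <= size (stgs s).1 -> r' i = stv (a0, q) (tau m0) (stgs s).1 i.
  move=> s [|i] Hi //=; rewrite /Wp (@limw_nth _ _ (a0, q) P0 n0 ext HE s) //.
have HW : forall s i, i < size (stgs s).1 -> W i = (nth (a0, q) (stgs s).1 i).1.
  by move=> s i Hi; rewrite /W /Wp (@limw_nth _ _ (a0, q) P0 n0 ext HE s).
have Hrun' : is_run A W r'.
  split; first exact: (init_g Hg a0).
  move=> i; have Hi : i < size (stgs i.+1).1 by exact: Hsz.
  rewrite (Hr'stv i.+1 i.+1 Hi) (Hr'stv i.+1 i (ltnW Hi)) (HW _ _ Hi).
  exact: (vp_step _ (VP _) Hi).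
have Hinf' : forall q', inf_often r' q' <-> T q'.
  move=> q'; split.
    move=> Hq'; have [[|k] [Hk Hrk]] := Hq' (size P0).+1; first by [].
    have Hk' : k < size (stgs k.+1).1 by exact: Hsz.
    have [[Bl [HP [_ TB]]] _] := Hinv k.+1.
    rewrite -Hrk /r' /Wp (@limw_nth _ _ (a0, q) P0 n0 ext HE k.+1) // HP nth_cat ltnNge.
    rewrite -ltnS Hk /=; apply: TB; apply: mem_nth.
    by rewrite -(ltn_add2l (size P0)) subnKC // -size_cat -HP.
  move=> [m [Hm Htm]] N; have [l [Hl Hml]] := proj1 (mem_pset _ _ _ _) Hm.
  set Ps := (stgs N).1; set zN := zs w r (stgs N).2 (nxt Ps (stgs N).2 - (stgs N).2).
  have HsN : (stgs N.+1).1 = (Ps ++ zN) ++ Yb by rewrite /stgs /= catA.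
  exists (size (Ps ++ zN) + l); split.
    by apply: leq_trans (Hsz N) _; rewrite size_cat -addnA leq_addr.
  rewrite (Hr'stv N.+1); last by rewrite HsN [size (_ ++ Yb)]size_cat leq_add2l size_ypr ltnW.
  rewrite HsN stv_cat.
  have VPz : vp A (tau m0) (Ps ++ zN) q.
    have [Hs1 [Hs2 _]] := Hnxt _ _ (Hinv N).
    have [_ [Hrn _]] := Hinv N.
    apply: (vp_cat (VP N)); rewrite -{1}Hrn -Hs2 -(subnKC (ltnW Hs1)); exact: zs_vp Hr.
  by rewrite (vp_end _ VPz) -Hq ypr_stv ?Hml // ltnW.
have HlW : lang A W.
  exists r'; split => //; rewrite /accepting.
  apply: acc_set_ext (proj1 (acc_map _ _ _) Hay) => q'; rewrite Hinf'; exact: iff_refl.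
have HmW := proj1 (lang_memacc Hg W) HlW.
have Hbadinf : forall N, exists k, N <= k /\ bad (memrun W k).
  move=> N; have [Hs1 [Hs2 [k [/andP [Hk1 Hk2] Hbk]]]] := Hnxt _ _ (Hinv N).
  exists k; split; first exact: leq_trans (Hsz N) Hk1.
  set Ps := (stgs N).1 in Hs1 Hs2 Hk1 Hk2 Hbk *; set n := (stgs N).2 in Hs1 Hs2 Hk1 Hk2 Hbk *.
  set zN := zs w r n (nxt Ps n - n).
  have HsN : (stgs N.+1).1 = (Ps ++ zN) ++ Yb by rewrite /stgs /= catA.
  have Hkz : k <= size (Ps ++ zN) by rewrite size_cat size_zs.
  suff -> : memrun W k = memrun (cat_w (map fst Ps) (fun i => w (i + n))) k by [].
  rewrite /memrun; congr (foldl rho m0).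
  have -> : prefix W k = map fst (prefix Wp k) by rewrite /prefix /mkseq -map_comp.
  rewrite (@limw_prefix _ _ (a0, q) P0 n0 ext HE N.+1); last first.
    by rewrite -/stgs HsN size_cat; apply: leq_trans Hkz (leq_addr _ _).
  rewrite -/stgs HsN takel_cat // map_take map_cat zs_fst.
  rewrite -(subnKC Hk1) -{3}(size_map fst Ps) prefix_cat_w take_cat size_map ltnNge leq_addr /=.
  by rewrite addKn take_prefix // -(leq_add2l (size Ps)) subnKC.
have [nu [Hbnu Hnuinf]] := PH Hbadinf.
exact: (acc_notbad Hg HBw HBg HBl HmW Hnuinf Hbnu).
Qed.

End Main5.

Unset Implicit Arguments.

Theorem corollary19 (Sigma Q : finType) (A : aut Sigma Q) :
  (is_streett A || is_rabin A) ->
  GFG A -> tight A -> GFG_NWW_recognizable A ->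
  exists alpha' : {set Q},
    let A' := Aut (init A) (delta A) (Buchi alpha') in
    weak A' /\ GFG A' /\ forall w, lang A' w <-> lang A w.
Proof.
move=> _ _ [M [m0 [rho [tau [Hg [Hused Hlink]]]]]] [Q' [B [HBw [HBg HBl]]]].
exists (alpha A m0 rho tau) => /=.
have Hsub := sub_lang Hg Hused Hlink HBw HBg HBl.
split; first exact: (alpha_weak Hg Hused Hlink HBw HBg HBl).
split.
  exists (tstrat m0 rho tau) => w; split; first exact: (Hg w).1.
  move=> [r [Hr Ha]]; have := Hsub w r Hr Ha.
  by move/(proj1 (lang_memacc Hg w)) => /acc_visits [q [Hq Hi]]; exists q.
move=> w; split.
  by move=> [r [Hr Ha]]; exact: Hsub w r Hr Ha.
move/(proj1 (lang_memacc Hg w)) => /acc_visits [q [Hq Hi]].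
exists (fun n => tstrat m0 rho tau (Defs.prefix w n)); split; first exact: (Hg w).1.
by exists q.
Qed.
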